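(* Let $G$ be a graph that has a proper VPG-representation $R_V$ in a $w\times h$-grid in which every vertex-path is $xy^+$-monotone. Then every subgraph $G'$ of $G$ has an $xy^+$-monotone EPG-representation in a $(2w+h)\times 2h$-grid.
   Context: The $w\times h$-grid consists of all grid-points $(i,j)$ with integer coordinates $1\le i\le w$, $1\le j\le h$, and all grid-edges joining grid-points at distance $1$. A vertex-path is a path in the grid. An EPG-representation of a graph $G$ assigns to each vertex $v$ a vertex-path $\mathrm{path}(v)$ such that $(v,w)$ is an edge of $G$ if and only if $\mathrm{path}(v)$ and $\mathrm{path}(w)$ share a grid-edge. A VPG-representation of $G$ assigns to each vertex a vertex-path such that $(v,w)$ is an edge if and only if $\mathrm{path}(v)$ and $\mathrm{path}(w)$ share a grid-point. A VPG-representation is proper if (a) every grid-edge is used by at most one vertex-path, and (b) whenever a grid-point $p$ belongs to both $\mathrm{path}(v)$ and $\mathrm{path}(w)$ ($v\neq w$), one of these two vertex-paths contains the grid-edge going rightward from $p$ and the other contains the grid-edge going upward from $p$. A vertex-path is $x$-monotone if every vertical line meeting it meets it in a single interval; it is $xy$-monotone if additionally every horizontal line meeting it meets it in a single interval; it is $xy^+$-monotone if it is $xy$-monotone and its left endpoint is not above its right endpoint (i.e., it is monotonically increasing). An ($xy^+$-monotone) EPG-representation is one in which all vertex-paths are ($xy^+$-monotone). *)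

(* Defs.v *)
From mathcomp Require Import all_boot.
Set Implicit Arguments. Unset Strict Implicit. Unset Printing Implicit Defensive.

(* Grid points are pairs (i, j) of naturals; .1 = x-coordinate, .2 = y-coordinate. *)
Definition point := (nat * nat)%type.

Definition in_grid (w h : nat) (p : point) : bool :=
  [&& 0 < p.1, p.1 <= w, 0 < p.2 & p.2 <= h].

Definition grid_adj (p q : point) : bool :=
  ((p.1 == q.1) && ((p.2 == q.2.+1) || (q.2 == p.2.+1))) ||
  ((p.2 == q.2) && ((p.1 == q.1.+1) || (q.1 == p.1.+1))).

Definition grid_path (w h : nat) (s : seq point) : Prop :=
  [/\ s != [::], uniq s, all (in_grid w h) s &
      forall i, i.+1 < size s -> grid_adj (nth (0,0) s i) (nth (0,0) s i.+1)].

Definition has_point (s : seq point) (p : point) : Prop := p \in s.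

Definition has_edge (s : seq point) (p q : point) : Prop :=
  exists i, i.+1 < size s /\
    ((nth (0,0) s i = p /\ nth (0,0) s i.+1 = q) \/
     (nth (0,0) s i = q /\ nth (0,0) s i.+1 = p)).

Definition share_point (s t : seq point) : Prop := exists p, p \in s /\ p \in t.

Definition share_edge (s t : seq point) : Prop :=
  exists p q, grid_adj p q /\ has_edge s p q /\ has_edge t p q.

(* x-monotone: every vertical line meets the path in a single interval, i.e.
   the indices of points with a given x-coordinate are contiguous. *)
Definition x_monotone (s : seq point) : Prop :=
  forall i j k, i <= j -> j <= k -> k < size s ->
    (nth (0,0) s i).1 = (nth (0,0) s k).1 ->
    (nth (0,0) s j).1 = (nth (0,0) s i).1.

Definition y_monotone (s : seq point) : Prop :=
  forall i j k, i <= j -> j <= k -> k < size s ->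
    (nth (0,0) s i).2 = (nth (0,0) s k).2 ->
    (nth (0,0) s j).2 = (nth (0,0) s i).2.

Definition xy_monotone (s : seq point) : Prop := x_monotone s /\ y_monotone s.

Definition xyplus_monotone (s : seq point) : Prop :=
  xy_monotone s /\
  let a := head (0,0) s in let b := last (0,0) s in
  (a.1 < b.1 -> a.2 <= b.2) /\ (b.1 < a.1 -> b.2 <= a.2).

Definition right_of (p : point) : point := (p.1.+1, p.2).
Definition up_of (p : point) : point := (p.1, p.2.+1).

Definition proper_VPG_rep (V : finType) (e : rel V) (w h : nat)
    (path : V -> seq point) : Prop :=
  [/\ forall v, grid_path w h (path v),
      forall u v, u != v -> (e u v <-> share_point (path u) (path v)),
      forall u v p q, u != v -> grid_adj p q ->
        has_edge (path u) p q -> has_edge (path v) p q -> False &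
      forall u v p, u != v -> p \in path u -> p \in path v ->
        (has_edge (path u) p (right_of p) /\ has_edge (path v) p (up_of p)) \/
        (has_edge (path u) p (up_of p) /\ has_edge (path v) p (right_of p))].

Definition EPG_rep (V : finType) (S : {set V}) (e' : rel V) (w h : nat)
    (path : V -> seq point) : Prop :=
  (forall v, v \in S -> grid_path w h (path v)) /\
  (forall u v, u \in S -> v \in S -> u != v ->
     (e' u v <-> share_edge (path u) (path v))).

(* Main.v *)
Require Import Defs.
From mathcomp Require Import all_boot zify.
From Stdlib Require Import Classical.
Set Implicit Arguments. Unset Strict Implicit.

Definition stair (p q : point) : bool := (q == right_of p) || (q == up_of p).
Definition le2 (p q : point) : bool := (p.1 <= q.1) && (p.2 <= q.2).
Definition lts (p q : point) : bool := p.1 + p.2 < q.1 + q.2.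

Lemma stairE (p q : point) : stair p q = (((q.1 == p.1.+1) && (q.2 == p.2)) || ((q.1 == p.1) && (q.2 == p.2.+1))).
Proof. by case: p q => [p1 p2] [q1 q2]; rewrite /stair /right_of /up_of !xpair_eqE. Qed.

Lemma stair_le2 : subrel stair le2.
Proof. move=> [p1 p2] [q1 q2]; rewrite stairE /le2 /=; lia. Qed.
Lemma stair_lts : subrel stair lts.
Proof. move=> [p1 p2] [q1 q2]; rewrite stairE /lts /=; lia. Qed.

Lemma stair_uniq s : sorted stair s -> uniq s.
Proof.
move=> H; apply: (@sorted_uniq _ lts).
- by move=> a b c; rewrite /lts; lia.
- by move=> a; rewrite /lts; lia.
- exact: sub_sorted stair_lts _ H.
Qed.

Lemma stair_nth s i j : sorted stair s -> i <= j -> j < size s ->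
  le2 (nth (0,0) s i) (nth (0,0) s j).
Proof.
move=> H ij js; have H2 := sub_sorted stair_le2 H.
have tr : transitive le2 by move=> a b c; rewrite /le2; lia.
have rf : reflexive le2 by move=> a; rewrite /le2; lia.
apply: (sorted_leq_nth tr rf (0,0) H2) => //; rewrite inE; lia.
Qed.

Lemma stair_xyplus s : sorted stair s -> xyplus_monotone s.
Proof.
move=> H; split; first split.
- move=> i j k ij jk ks e; have := stair_nth H ij (leq_ltn_trans jk ks);
  have := stair_nth H jk ks; rewrite /le2; lia.
- move=> i j k ij jk ks e; have := stair_nth H ij (leq_ltn_trans jk ks);
  have := stair_nth H jk ks; rewrite /le2; lia.
case: s H => [|a t] H /=; first by [].
have := stair_nth H (leq0n (size t)) (ltnSn _).
rewrite nth_last /=; rewrite /le2; lia.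
Qed.

Lemma stair_grid w h s : s != [::] -> sorted stair s ->
  in_grid w h (head (0,0) s) -> in_grid w h (last (0,0) s) -> grid_path w h s.
Proof.
move=> ne H hd tl; split => //.
- exact: stair_uniq.
- apply/allP => p ps.
  have ip : index p s < size s by rewrite index_mem.
  have e := nth_index (0,0) ps.
  have l1 := stair_nth H (leq0n (index p s)) ip.
  have l2 : index p s <= (size s).-1 by case: (size s) ip => //.
  have l3 : (size s).-1 < size s by case: (size s) ip.
  have l4 := stair_nth H l2 l3.
  rewrite e nth0 in l1; rewrite e nth_last in l4.
  move: hd tl l1 l4; rewrite /in_grid /le2; lia.
- move=> i lt; have := (sortedP (0,0) H) i lt.
  case: (nth _ s i) => p1 p2; case: (nth _ s i.+1) => q1 q2.
  rewrite stairE /grid_adj /=; lia.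
Qed.

Lemma he_head (a b : point) t : has_edge [:: a, b & t] a b.
Proof. by exists 0; split => //; left. Qed.

Lemma he_cons x t p q : has_edge t p q -> has_edge (x :: t) p q.
Proof. by case=> i [lt H]; exists i.+1; split. Qed.

Lemma he_catl s1 t p q : has_edge t p q -> has_edge (s1 ++ t) p q.
Proof. by elim: s1 => //= x s1 IH /IH; apply: he_cons. Qed.

Lemma he_inv x t p q : has_edge (x :: t) p q ->
  (exists t', t = p :: t' /\ x = q) \/ (exists t', t = q :: t' /\ x = p) \/ has_edge t p q.
Proof.
case=> [[|i]] [lt H].
- case: t lt H => //= y t' _ [[-> ->]|[-> ->]]; [right; left|left]; by exists t'.
- by right; right; exists i.
Qed.

Lemma he_mem s p q : has_edge s p q -> p \in s /\ q \in s.
Proof.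
case=> i [lt H]; have m1 := mem_nth (0,0) lt; have m2 := mem_nth (0,0) (ltnW lt).
by case: H => [[<- <-]|[<- <-]].
Qed.

Lemma he_rev s p q : has_edge s p q -> has_edge (rev s) p q.
Proof.
case=> i [lt H]; exists (size s - i.+2); split; first by rewrite size_rev; lia.
have E : @size point s = @size (nat*nat) s := erefl.
rewrite !nth_rev ?E; try (rewrite ?E; lia).
rewrite ?E.
have -> : size s - (size s - i.+2).+1 = i.+1 by lia.
have -> : size s - (size s - i.+2).+2 = i by lia.
by case: H => [[-> ->]|[-> ->]]; [right|left].
Qed.

Definition Pm (a : point) : point := (2*a.1 + a.2, 2*a.2).
Definition Hm (a : point) : point := ((2*a.1+a.2).+1, 2*a.2).
Definition V1 (a : point) : point := (2*a.1+a.2, (2*a.2).+1).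
Definition V2 (a : point) : point := ((2*a.1+a.2).+1, (2*a.2).+1).
Definition mid (r : point -> bool) (a b : point) : seq point :=
  if b == right_of a then [:: Hm a] else if r a then [:: Hm a; V2 a] else [:: V1 a; V2 a].
Fixpoint rest r (a : point) (t : seq point) : seq point :=
  if t is b :: t' then mid r a b ++ Pm b :: rest r b t' else [::].
Definition outf r a t := Pm a :: rest r a t.
Definition out r (s : seq point) := if s is a :: t then outf r a t else [::].

Lemma stair_cases a b : stair a b -> b = right_of a \/ (b = up_of a /\ b != right_of a).
Proof.
rewrite /stair; case: eqP => [->|_] /=; first by left.
move/eqP => ->; right; split => //; case: a => a1 a2; rewrite /right_of /up_of xpair_eqE /=; lia.
Qed.

Ltac pe := rewrite ?xpair_eqE /= ; lia.

Lemma out_stair r a t : path stair a t -> path stair (Pm a) (rest r a t).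
Proof.
elim: t a => //= b t IH a /andP [ab pt].
have IHb := IH b pt.
rewrite /mid; case: (stair_cases ab) => [E|[E ne]].
  rewrite E eqxx /= -E IHb andbT E !stairE /Pm /Hm /right_of /=; lia.
rewrite (negbTE ne) E; case: (r a) => /=; rewrite -E IHb andbT E !stairE /Pm /Hm /V1 /V2 /up_of /=; lia.
Qed.

Lemma out_last r a t : last (Pm a) (rest r a t) = Pm (last a t).
Proof.
elim: t a => //= b t IH a; rewrite last_cat /=; exact: IH.
Qed.

Lemma out_mem (r : point -> bool) a t z : path stair a t -> z \in outf r a t ->
  (exists c, c \in a :: t /\ z = Pm c) \/
  (exists c, z = Hm c /\ (has_edge (a :: t) c (right_of c) \/
                          (has_edge (a :: t) c (up_of c) /\ r c))) \/
  (exists c, (z = V1 c \/ z = V2 c) /\ has_edge (a :: t) c (up_of c)).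
Proof.
elim: t a => [|b t IH] a /=.
  by rewrite inE => _ /eqP ->; left; exists a; rewrite inE eqxx.
move=> /andP [ab pt]; rewrite inE mem_cat => /orP [/eqP ->|/orP [zm|zr]].
- by left; exists a; rewrite inE eqxx.
- right; move: zm; rewrite /mid; case: (stair_cases ab) => [E|[E ne]].
    rewrite E eqxx inE => /eqP ->; left; exists a; split => //; left; rewrite -E; exact: he_head.
  rewrite (negbTE ne); case ra: (r a); rewrite !inE => /orP [/eqP ->|/eqP ->].
  + by left; exists a; split => //; right; split => //; rewrite -E; exact: he_head.
  + by right; exists a; split; [right|rewrite -E; exact: he_head].
  + by right; exists a; split; [left|rewrite -E; exact: he_head].
  + by right; exists a; split; [right|rewrite -E; exact: he_head].
- case: (IH b pt zr) => [[c [cm ->]]|[[c [-> H]]|[c [zc H]]]].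
  + by left; exists c; rewrite inE cm orbT.
  + right; left; exists c; split => //; case: H => [H|[H rc]]; [left|right; split => //]; exact: he_cons.
  + by right; right; exists c; split => //; exact: he_cons.
Qed.

Lemma stair_not_rev a b : stair a b -> forall c, ~ (a = right_of c /\ b = c) /\ ~ (a = up_of c /\ b = c).
Proof.
move=> ab c; split => -[E1 E2]; move: ab; rewrite E1 E2 stairE /right_of /up_of /=; lia.
Qed.

Lemma out_edge (r : point -> bool) a t c : path stair a t ->
  (has_edge (a :: t) c (right_of c) \/ (has_edge (a :: t) c (up_of c) /\ r c)) ->
  has_edge (outf r a t) (Pm c) (Hm c).
Proof.
elim: t a => [|b t IH] a /=.
  by move=> _ [[i [lt _]]|[[i [lt _]] _]].
move=> /andP [ab pt] H.
have NR := stair_not_rev ab c.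
have HB : (has_edge (b :: t) c (right_of c) \/ (has_edge (b :: t) c (up_of c) /\ r c)) ->
   has_edge (outf r a (b :: t)) (Pm c) (Hm c).
  move=> /(IH b pt) Hb; rewrite /outf /=.
  have -> : Pm a :: mid r a b ++ Pm b :: rest r b t = (Pm a :: mid r a b) ++ outf r b t by [].
  exact: he_catl.
case: H => [H|[H rc]].
- case: (he_inv H) => [[t' [E1 E2]]|[[t' [E1 E2]]|H']].
  + by exfalso; apply: NR.1; split; [|case: E1].
  + case: E1 => E1 E3; rewrite /outf /= /mid E1 E2 eqxx /=; exact: he_head.
  + by apply: HB; left.
- case: (he_inv H) => [[t' [E1 E2]]|[[t' [E1 E2]]|H']].
  + by exfalso; apply: NR.2; split; [|case: E1].
  + case: E1 => E1 E3.
    have ne : up_of c != right_of c by rewrite /up_of /right_of xpair_eqE /=; lia.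
    rewrite /outf /= /mid E1 E2 (negbTE ne) rc /=; exact: he_head.
  + by apply: HB; right.
Qed.

Section F.
Variables (f : nat -> nat) (n : nat).
Hypothesis step : forall k, k.+1 < n -> f k.+1 <= (f k).+1 /\ f k <= (f k.+1).+1.

Lemma ivt_up a b c : a <= b -> b < n -> f a <= c -> c <= f b -> exists m, a <= m <= b /\ f m = c.
Proof.
elim: b => [|b IH] ab bn c1 c2.
  by exists 0; split => //; move: ab; rewrite leqn0 => /eqP E; move: c1; rewrite E; lia.
case: (eqVneq c (f b.+1)) => [->|ne]; first by exists b.+1; rewrite ab leqnn.
have [s1 s2] := step bn.
have ab' : a <= b by move: ab; rewrite leq_eqVlt => /orP [/eqP E|]; [move: c1 c2 ne; rewrite E; lia|].
have [m [mr fm]] := IH ab' (ltnW bn) c1 ltac:(lia).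
by exists m; split => //; lia.
Qed.

Lemma ivt_down a b c : a <= b -> b < n -> f b <= c -> c <= f a -> exists m, a <= m <= b /\ f m = c.
Proof.
elim: b => [|b IH] ab bn c1 c2.
  by exists 0; split => //; move: ab; rewrite leqn0 => /eqP E; move: c2; rewrite E; lia.
case: (eqVneq c (f b.+1)) => [->|ne]; first by exists b.+1; rewrite ab leqnn.
have [s1 s2] := step bn.
have ab' : a <= b by move: ab; rewrite leq_eqVlt => /orP [/eqP E|]; [move: c1 c2 ne; rewrite E; lia|].
have [m [mr fm]] := IH ab' (ltnW bn) ltac:(lia) c2.
by exists m; split => //; lia.
Qed.

Hypothesis cont : forall i j k, i <= j -> j <= k -> k < n -> f i = f k -> f j = f i.

Lemma no_turn i j : i.+1 < n -> j.+1 < n -> f i = (f i.+1).+1 -> f j.+1 = (f j).+1 -> False.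
Proof.
move=> iN jN di ij.
case: (ltngtP i j) => [lt|lt|E]; last by move: di ij; rewrite E; lia.
- case: (leqP (f i.+1) (f j)) => le.
  + have [m [mr fm]] := @ivt_up i.+1 j.+1 (f i) ltac:(lia) jN ltac:(lia) ltac:(lia).
    have := @cont i i.+1 m ltac:(lia) ltac:(lia) ltac:(lia).
    lia.
  + have [m [mr fm]] := @ivt_down i.+1 j (f j.+1) ltac:(lia) (ltnW jN) ltac:(lia) ltac:(lia).
    have := @cont m j j.+1 ltac:(lia) ltac:(lia) ltac:(lia). lia.
- case: (leqP (f i) (f j.+1)) => le.
  + have [m [mr fm]] := @ivt_down j.+1 i.+1 (f j) ltac:(lia) iN ltac:(lia) ltac:(lia).
    have := @cont j j.+1 m ltac:(lia) ltac:(lia) ltac:(lia). lia.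
  + have [m [mr fm]] := @ivt_up j.+1 i (f i.+1) ltac:(lia) (ltnW iN) ltac:(lia) ltac:(lia).
    have := @cont m i i.+1 ltac:(lia) ltac:(lia) ltac:(lia). lia.
Qed.
End F.

Lemma mono_up (f : nat -> nat) n : (forall k, k.+1 < n -> f k <= f k.+1) ->
  forall a b, a <= b -> b < n -> f a <= f b.
Proof.
move=> H a; elim=> [|b IH] ab bn; first by move: ab; rewrite leqn0 => /eqP ->.
case: (eqVneq a b.+1) => [->//|ne]; have := H b bn; have := IH ltac:(lia) (ltnW bn); lia.
Qed.

Lemma mono_down (f : nat -> nat) n : (forall k, k.+1 < n -> f k.+1 <= f k) ->
  forall a b, a <= b -> b < n -> f b <= f a.
Proof.
move=> H a; elim=> [|b IH] ab bn; first by move: ab; rewrite leqn0 => /eqP ->.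
case: (eqVneq a b.+1) => [->//|ne]; have := H b bn; have := IH ltac:(lia) (ltnW bn); lia.
Qed.

Lemma dich (s : seq point) :
  (forall i, i.+1 < size s -> grid_adj (nth (0,0) s i) (nth (0,0) s i.+1)) ->
  xyplus_monotone s -> sorted stair s \/ sorted stair (rev s).
Proof.
move=> adj [[xm ym] ends].
destruct (classic (forall k, k.+1 < size s -> stair (nth (0,0) s k) (nth (0,0) s k.+1))) as [A|A].
  by left; apply/(sortedP (0,0)).
destruct (classic (forall k, k.+1 < size s -> stair (nth (0,0) s k.+1) (nth (0,0) s k))) as [B|B].
  by right; rewrite rev_sorted; apply/(sortedP (0,0)).
exfalso.
have [k0 H0] := not_all_ex_not _ _ A; have [k0n S0] := imply_to_and _ _ H0.
have [k1 H1] := not_all_ex_not _ _ B; have [k1n S1] := imply_to_and _ _ H1.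
set n := size s in k0n k1n adj xm ym ends.
set x := fun k => (nth (0,0) s k).1.
set y := fun k => (nth (0,0) s k).2.
have stepx : forall k, k.+1 < n -> x k.+1 <= (x k).+1 /\ x k <= (x k.+1).+1.
  by move=> k kn; have := adj k kn; rewrite /x /grid_adj; lia.
have stepy : forall k, k.+1 < n -> y k.+1 <= (y k).+1 /\ y k <= (y k.+1).+1.
  by move=> k kn; have := adj k kn; rewrite /y /grid_adj; lia.
have c0 : (x k0 = (x k0.+1).+1 /\ y k0 = y k0.+1) \/ (x k0 = x k0.+1 /\ y k0 = (y k0.+1).+1).
  move: S0 (adj k0 k0n); rewrite stairE /x /y /grid_adj; lia.
have c1 : (x k1.+1 = (x k1).+1 /\ y k0 = y k0) /\ y k1 = y k1.+1 \/ (x k1 = x k1.+1 /\ y k1.+1 = (y k1).+1).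
  move: S1 (adj k1 k1n); rewrite stairE /x /y /grid_adj; lia.
have ntx := @no_turn x n stepx xm.
have nty := @no_turn y n stepy ym.
have hd : head (0,0) s = nth (0,0) s 0 by rewrite nth0.
have tl : last (0,0) s = nth (0,0) s n.-1 by rewrite nth_last.
move: ends; rewrite hd tl -/(x 0) -/(y 0) -/(x n.-1) -/(y n.-1) => -[e1 e2].
case: c0 => [[a0 b0]|[a0 b0]]; case: c1 => [[[a1 _] b1]|[a1 b1]].
- exact: (ntx k0 k1).
-
  have xd : forall k, k.+1 < n -> x k.+1 <= x k.
    move=> k kn; have := stepx k kn; case: (leqP (x k.+1) (x k)) => // lt st.
    exfalso; apply: (ntx k0 k) => //; lia.
  have yu : forall k, k.+1 < n -> y k <= y k.+1.
    move=> k kn; have := stepy k kn; case: (leqP (y k) (y k.+1)) => // lt st.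
    exfalso; apply: (nty k k1) => //; lia.
  have := mono_down xd (leq0n k0) (ltnW k0n).
  have := mono_down xd (_ : k0.+1 <= n.-1) (_ : n.-1 < n).
  have := mono_up yu (leq0n k1) (ltnW k1n).
  have := mono_up yu (_ : k1.+1 <= n.-1) (_ : n.-1 < n).
  subst x y; lia.
-
  have xu : forall k, k.+1 < n -> x k <= x k.+1.
    move=> k kn; have := stepx k kn; case: (leqP (x k) (x k.+1)) => // lt st.
    exfalso; apply: (ntx k k1) => //; lia.
  have yd : forall k, k.+1 < n -> y k.+1 <= y k.
    move=> k kn; have := stepy k kn; case: (leqP (y k.+1) (y k)) => // lt st.
    exfalso; apply: (nty k0 k) => //; lia.
  have := mono_up xu (leq0n k1) (ltnW k1n).
  have := mono_up xu (_ : k1.+1 <= n.-1) (_ : n.-1 < n).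
  have := mono_down yd (leq0n k0) (ltnW k0n).
  have := mono_down yd (_ : k0.+1 <= n.-1) (_ : n.-1 < n).
  subst x y; lia.
- exact: (nty k0 k1).
Qed.

Definition norm (s : seq point) := if sorted stair s then s else rev s.

Lemma norm_mem s c : (c \in norm s) = (c \in s).
Proof. by rewrite /norm; case: ifP => // _; rewrite mem_rev. Qed.

Lemma norm_he s p q : has_edge (norm s) p q <-> has_edge s p q.
Proof.
rewrite /norm; case: ifP => // _; split; first by move/he_rev; rewrite revK.
exact: he_rev.
Qed.

Lemma norm_ok w h s : grid_path w h s -> xyplus_monotone s ->
  exists a t, norm s = a :: t /\ path stair a t.
Proof.
move=> [ne _ _ adj] mo.
have : sorted stair (norm s).
  rewrite /norm; case: ifP => // ns; case: (dich adj mo) => //; by rewrite ns.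
have : norm s != [::] by rewrite /norm; case: ifP => //; rewrite -size_eq0 size_rev size_eq0.
by case: (norm s) => // a t _ pt; exists a, t.
Qed.

Lemma Pm_Hm c d : Pm c <> Hm d. Proof. case: c d => [c1 c2] [d1 d2]; rewrite /Pm /Hm /= => -[]; lia. Qed.
Lemma Pm_V1 c d : Pm c <> V1 d. Proof. case: c d => [c1 c2] [d1 d2]; rewrite /Pm /V1 /= => -[]; lia. Qed.
Lemma Pm_V2 c d : Pm c <> V2 d. Proof. case: c d => [c1 c2] [d1 d2]; rewrite /Pm /V2 /= => -[]; lia. Qed.
Lemma Hm_V1 c d : Hm c <> V1 d. Proof. case: c d => [c1 c2] [d1 d2]; rewrite /Hm /V1 /= => -[]; lia. Qed.
Lemma Hm_V2 c d : Hm c <> V2 d. Proof. case: c d => [c1 c2] [d1 d2]; rewrite /Hm /V2 /= => -[]; lia. Qed.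
Lemma V1_V2 c d : V1 c <> V2 d. Proof. case: c d => [c1 c2] [d1 d2]; rewrite /V1 /V2 /= => -[]; lia. Qed.
Lemma Hm_inj c d : Hm c = Hm d -> c = d.
Proof. case: c d => [c1 c2] [d1 d2]; rewrite /Hm /= => -[] h1 h2; f_equal; lia. Qed.
Lemma V1_inj c d : V1 c = V1 d -> c = d.
Proof. case: c d => [c1 c2] [d1 d2]; rewrite /V1 /= => -[] h1 h2; f_equal; lia. Qed.
Lemma V2_inj c d : V2 c = V2 d -> c = d.
Proof. case: c d => [c1 c2] [d1 d2]; rewrite /V2 /= => -[] h1 h2; f_equal; lia. Qed.
Lemma Pm_adj c d : ~~ grid_adj (Pm c) (Pm d).
Proof. case: c d => [c1 c2] [d1 d2]; rewrite /Pm /grid_adj /=; lia. Qed.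
Lemma adj_PH c : grid_adj (Pm c) (Hm c).
Proof. case: c => [c1 c2]; rewrite /Pm /Hm /grid_adj /=; lia. Qed.
Lemma adj_R c : grid_adj c (right_of c).
Proof. case: c => [c1 c2]; rewrite /right_of /grid_adj /=; lia. Qed.
Lemma adj_U c : grid_adj c (up_of c).
Proof. case: c => [c1 c2]; rewrite /up_of /grid_adj /=; lia. Qed.

Theorem lemma2 (V : finType) (e : rel V) (w h : nat)
    (e_sym : symmetric e) (e_irr : irreflexive e)
    (RV : V -> seq point)
    (HRV : proper_VPG_rep e w h RV)
    (Hmono : forall v, xyplus_monotone (RV v))
    (S : {set V}) (e' : rel V)
    (e'_sym : symmetric e')
    (e'_sub : forall u v, e' u v -> [&& u \in S, v \in S & e u v]) :
  exists path' : V -> seq point,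
    EPG_rep S e' (2 * w + h) (2 * h) path' /\
    (forall v, v \in S -> xyplus_monotone (path' v)).
Proof.
case: HRV => Hg Hb Hc Hd.
pose rr v a := [exists u, (u != v) && (a \in RV u) && e' u v].
pose pth v := out (rr v) (norm (RV v)).
have NO v := norm_ok (Hg v) (Hmono v).
have Pst v : sorted stair (pth v).
  by have [a [t [E pt]]] := NO v; rewrite /pth E /=; exact: out_stair.
have Pgrid v : grid_path (2 * w + h) (2 * h) (pth v).
  have [a [t [E pt]]] := NO v.
  have ing c : c \in a :: t -> in_grid (2 * w + h) (2 * h) (Pm c).
    rewrite -E norm_mem => cm; case: (Hg v) => _ _ /allP /(_ c cm) + _.
    by case: c {cm} => c1 c2; rewrite /in_grid /Pm /=; lia.
  rewrite /pth E /=; apply: stair_grid => //.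
  - by have := Pst v; rewrite /pth E.
  - by apply: ing; rewrite inE eqxx.
  - by rewrite /= out_last; apply: ing; rewrite mem_last.
have Pcls v z : z \in pth v ->
  (exists c, c \in RV v /\ z = Pm c) \/
  (exists c, z = Hm c /\ (has_edge (RV v) c (right_of c) \/
                          (has_edge (RV v) c (up_of c) /\ rr v c))) \/
  (exists c, (z = V1 c \/ z = V2 c) /\ has_edge (RV v) c (up_of c)).
  have [a [t [E pt]]] := NO v; rewrite /pth E /= => zm.
  case: (out_mem pt zm) => [[c [cm ->]]|[[c [-> H]]|[c [zc H]]]].
  - by left; exists c; rewrite -norm_mem E.
  - by right; left; exists c; split => //; rewrite -!E !norm_he in H.
  - by right; right; exists c; split => //; rewrite -E norm_he in H.
have Pedge v c : (has_edge (RV v) c (right_of c) \/ (has_edge (RV v) c (up_of c) /\ rr v c)) ->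
    has_edge (pth v) (Pm c) (Hm c).
  have [a [t [E pt]]] := NO v; rewrite /pth E /= => H; apply: out_edge => //.
  by rewrite -!E !norm_he.
have noR u v c : u != v -> has_edge (RV u) c (right_of c) -> has_edge (RV v) c (right_of c) -> False.
  by move=> ne; apply: Hc ne (adj_R c).
have noU u v c : u != v -> has_edge (RV u) c (up_of c) -> has_edge (RV v) c (up_of c) -> False.
  by move=> ne; apply: Hc ne (adj_U c).
have three u v u' c : u != v -> u' != v -> u' != u -> c \in RV u -> c \in RV v -> c \in RV u' -> False.
  move=> n1 n2 n3 m1 m2 m3.
  have vu : v != u by rewrite eq_sym.
  case: (Hd u v c n1 m1 m2) => [[a1 b1]|[a1 b1]];
  case: (Hd u' u c n3 m3 m1) => [[a2 b2]|[a2 b2]].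
  - exact: (noR u' u c n3 a2 a1).
  - case: (Hd u' v c n2 m3 m2) => [[a3 b3]|[a3 b3]]; [exact: (noR u' u c n3 a3 a1)|exact: (noU u' v c n2 a3 b1)].
  - case: (Hd u' v c n2 m3 m2) => [[a3 b3]|[a3 b3]]; [exact: (noR u' v c n2 a3 b1)|exact: (noU u' u c n3 a3 a1)].
  - exact: (noU u' u c n3 a2 a1).
exists pth; split; last by move=> v _; exact: stair_xyplus.
split; first by move=> v _.
move=> u v uS vS ne; split.
- move=> e'uv; have /and3P [_ _ euv] := e'_sub u v e'uv.
  have [a [au av]] := (Hb u v ne).1 euv.
  case: (Hd u v a ne au av) => [[Ru Uv]|[Uu Rv]].
  + have rv : rr v a by apply/existsP; exists u; rewrite ne au e'uv.
    exists (Pm a), (Hm a); split; first exact: adj_PH.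
    by split; apply: Pedge; [left|right].
  + have ru : rr u a by apply/existsP; exists v; rewrite eq_sym ne av e'_sym e'uv.
    exists (Pm a), (Hm a); split; first exact: adj_PH.
    by split; apply: Pedge; [right|left].
- move=> [p [q [pq [hu hv]]]].
  have [pu qu] := he_mem hu; have [pv qv] := he_mem hv.
  have [z [zu zv Hz]] : exists z, [/\ z \in pth u, z \in pth v &
     (exists c, z = Hm c /\ (has_edge (RV u) c (right_of c) \/
                          (has_edge (RV u) c (up_of c) /\ rr u c))) \/
     (exists c, (z = V1 c \/ z = V2 c) /\ has_edge (RV u) c (up_of c))].
    case: (Pcls u p pu) => [[c [_ Ep]]|Hp]; last by exists p.
    case: (Pcls u q qu) => [[d [_ Eq]]|Hq]; last by exists q.
    by move: pq; rewrite Ep Eq (negbTE (Pm_adj c d)).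
  case: (Pcls v z zv) => [[d [_ Ez]]|[[d [Ez Hv]]|[d [Ez Hv]]]];
  case: Hz => [[c [Ec Hu]]|[c [Ec Hu]]].
  + by exfalso; apply: (@Pm_Hm d c); rewrite -Ez -Ec.
  + by exfalso; case: Ec => Ec; [apply: (@Pm_V1 d c)|apply: (@Pm_V2 d c)]; rewrite -Ez -Ec.
  + have cd : c = d by apply: Hm_inj; rewrite -Ec -Ez.
    subst d.
    case: Hu => [Ru|[Uu ru]]; case: Hv => [Rv|[Uv rv]].
    * by exfalso; apply: (noR u v c ne Ru Rv).
    * case/existsP: rv => u' /andP [/andP [n' m'] ee].
      case: (eqVneq u' u) => [E|n2]; first by rewrite -E.
      exfalso; apply: (three u v u' c ne n' n2 (he_mem Ru).1 (he_mem Uv).1 m').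
    * case/existsP: ru => u' /andP [/andP [n' m'] ee].
      case: (eqVneq u' v) => [E|n2]; first by rewrite e'_sym -E.
      have vu : v != u by rewrite eq_sym.
      exfalso; apply: (three v u u' c vu n' n2 (he_mem Rv).1 (he_mem Uu).1 m').
    * by exfalso; apply: (noU u v c ne Uu Uv).
  + by exfalso; case: Ec => Ec; [apply: (@Hm_V1 d c)|apply: (@Hm_V2 d c)]; rewrite -Ez -Ec.
  + by exfalso; case: Ez => Ez; [apply: (@Hm_V1 c d)|apply: (@Hm_V2 c d)]; rewrite -Ez -Ec.
  + have cd : c = d.
      case: Ec => Ec; case: Ez => Ez.
      * by apply: V1_inj; rewrite -Ec -Ez.
      * by exfalso; apply: (@V1_V2 c d); rewrite -Ec -Ez.
      * by exfalso; apply: (@V1_V2 d c); rewrite -Ec -Ez.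
      * by apply: V2_inj; rewrite -Ec -Ez.
    subst d; by exfalso; apply: (noU u v c ne Hu Hv).
Qed.
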